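(* Let $h:\mathbb{R}\to[0,+\infty)$ be a continuous multiplicative function (i.e. $h(xy)=h(x)h(y)$ for all $x,y\in\mathbb{R}$) such that $h(t)\ge t$ for all $t$, $h(0)=0$ and $h(1)=1$. Let $f:[a,b]\to\mathbb{R}$ be $h$-mid-convex, i.e. $$f\Big(\frac{x+y}{2}\Big)\le h\Big(\frac12\Big)\big(f(x)+f(y)\big)\quad\text{for all } x,y\in[a,b],$$ and suppose there is $M\in\mathbb{R}$ with $f(x)\le M$ for all $x\in[a,b]$. Then $f$ is continuous. *)

(* Defs.v *)
From Stdlib Require Import Reals.
Open Scope R_scope.

Definition multiplicative (h : R -> R) : Prop :=
  forall x y : R, h (x * y) = h x * h y.

Definition h_midconvex (h : R -> R) (a b : R) (f : R -> R) : Prop :=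
  forall x y : R, a <= x <= b -> a <= y <= b ->
    f ((x + y) / 2) <= h (1 / 2) * (f x + f y).

(* Main.v *)
Require Import Defs.
From Stdlib Require Import Reals Lra.
Open Scope R_scope.

Lemma Rabs_le_inv x y : Rabs x <= y -> - y <= x <= y.
Proof. unfold Rabs; destruct (Rcase_abs x); lra. Qed.

Lemma pow2_ge n : INR n + 1 <= 2 ^ n.
Proof.
  induction n as [|n IH]; [simpl; lra|]. rewrite S_INR; simpl pow.
  assert (1 <= 2 ^ n) by (apply pow_R1_Rle; lra). lra.
Qed.

Lemma ub (f : R -> R) (a b M x0 d : R) :
  (forall x y, a <= x <= b -> a <= y <= b -> f ((x + y) / 2) <= / 2 * (f x + f y)) ->
  (forall x, a <= x <= b -> f x <= M) ->
  0 < d -> a <= x0 - d -> x0 + d <= b ->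
  forall n u, Rabs u <= d / 2 ^ n -> f (x0 + u) <= f x0 + (M - f x0) / 2 ^ n.
Proof.
  intros H HM Hd Ha Hb n.
  induction n as [|n IH]; intros u Hu.
  - simpl in *. replace ((M - f x0) / 1) with (M - f x0) by field.
    replace (d/1) with d in Hu by field.
    assert (a <= x0 + u <= b) by (apply Rabs_le_inv in Hu; lra).
    specialize (HM _ H0). lra.
  - assert (Hp : 1 <= 2 ^ n) by (apply pow_R1_Rle; lra).
    simpl pow in *.
    assert (E : d / (2 * 2 ^ n) = (d / 2 ^ n) / 2) by (field; lra).
    rewrite E in Hu.
    assert (Hu2 : Rabs (2 * u) <= d / 2 ^ n).
    { rewrite Rabs_mult, Rabs_right by lra. lra. }
    assert (Hdn : d / 2 ^ n <= d).
    { unfold Rdiv. rewrite <- (Rmult_1_r d) at 2. apply Rmult_le_compat_l; [lra|].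
      rewrite <- Rinv_1. apply Rinv_le_contravar; lra. }
    assert (Hin : a <= x0 + 2 * u <= b).
    { apply Rabs_le_inv in Hu2. lra. }
    assert (Hx0 : a <= x0 <= b) by lra.
    specialize (IH _ Hu2).
    replace (x0 + u) with ((x0 + (x0 + 2 * u)) / 2) by field.
    assert (E2 : (M - f x0) / (2 * 2 ^ n) = ((M - f x0) / 2 ^ n) / 2) by (field; lra).
    rewrite E2. specialize (H _ _ Hx0 Hin). lra.
Qed.

Theorem lemma3p1 (h : R -> R) (a b M : R) (f : R -> R) :
  continuity h ->
  (forall t : R, 0 <= h t) ->
  multiplicative h ->
  (forall t : R, t <= h t) ->
  h 0 = 0 -> h 1 = 1 ->
  h_midconvex h a b f ->
  (forall x : R, a <= x <= b -> f x <= M) ->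
  forall x : R, a < x < b -> continuity_pt f x.
Proof.
  intros _ Hpos Hmul Hge H0 H1 Hmid HM x0 Hx0.
  assert (Hh : h (1/2) = /2).
  { assert (E : h 2 * h (1/2) = 1) by (rewrite <- Hmul; replace (2 * (1/2)) with 1 by field; exact H1).
    pose proof (Hge 2). pose proof (Hge (1/2)). nra. }
  assert (H : forall x y, a <= x <= b -> a <= y <= b -> f ((x + y) / 2) <= / 2 * (f x + f y)).
  { intros x y Hx Hy. rewrite <- Hh. apply Hmid; auto. }
  set (d := Rmin (x0 - a) (b - x0)).
  assert (Hd : 0 < d) by (unfold d; apply Rmin_glb_lt; lra).
  assert (Hda : d <= x0 - a) by apply Rmin_l.
  assert (Hdb : d <= b - x0) by apply Rmin_r.
  set (K := M - f x0).
  assert (HK : 0 <= K) by (unfold K; assert (f x0 <= M) by (apply HM; lra); lra).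
  pose proof (ub f a b M x0 d H HM Hd ltac:(lra) ltac:(lra)) as U.
  unfold continuity_pt, continue_in, limit1_in, limit_in. simpl. unfold R_dist.
  intros eps Heps.
  destruct (archimed (K / eps)) as [Hn _].
  assert (Hup : (0 <= up (K / eps))%Z).
  { apply le_IZR. assert (0 <= K / eps) by (unfold Rdiv; apply Rmult_le_pos; [lra|left; apply Rinv_0_lt_compat; lra]). lra. }
  destruct (IZN _ Hup) as [n En]. rewrite En, <- INR_IZR_INZ in Hn.
  pose proof (pow2_ge n) as Hp.
  assert (Hp0 : 0 < 2 ^ n) by (apply pow_lt; lra).
  assert (HKn : K / 2 ^ n < eps).
  { apply (Rmult_lt_reg_r (2 ^ n)); [lra|]. unfold Rdiv. rewrite Rmult_assoc, Rinv_l by lra.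
    rewrite Rmult_1_r.
    assert (K < eps * INR n + eps).
    { apply (Rmult_lt_compat_r eps) in Hn; [|lra]. unfold Rdiv in Hn.
      rewrite Rmult_assoc, Rinv_l, Rmult_1_r in Hn by lra. lra. }
    nra. }
  exists (d / 2 ^ n). split; [apply Rdiv_lt_0_compat; lra|].
  intros x1 [_ Hx1].
  set (u := x1 - x0) in *.
  assert (Hu : Rabs u <= d / 2 ^ n) by lra.
  assert (Hu' : Rabs (- u) <= d / 2 ^ n) by (rewrite Rabs_Ropp; lra).
  pose proof (U n u Hu) as A. pose proof (U n (- u) Hu') as B.
  assert (Hdn : d / 2 ^ n <= d).
  { unfold Rdiv. rewrite <- (Rmult_1_r d) at 2. apply Rmult_le_compat_l; [lra|].
    rewrite <- Rinv_1. pose proof (pos_INR n). apply Rinv_le_contravar; lra. }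
  assert (Hi1 : a <= x0 + u <= b) by (apply Rabs_le_inv in Hu; lra).
  assert (Hi2 : a <= x0 + - u <= b) by (apply Rabs_le_inv in Hu; lra).
  pose proof (H _ _ Hi1 Hi2) as C.
  replace ((x0 + u + (x0 + - u)) / 2) with x0 in C by field.
  replace x1 with (x0 + u) by (unfold u; ring).
  fold K in A, B.
  apply Rabs_def1; lra.
Qed.
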